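(* For $n\ge 1$, let $\gamma(n)$ denote the number of partitions of $n$ having no part equal to $1$ and in which the largest part appears at least twice. Then for all $n\ge 26$, $$\gamma(n)\ \ge\ \gamma(n-1).$$
   Context: Partitions with no part equal to $1$ whose largest part occurs at least twice are called ground state non-unitary partitions; $\gamma(n)$ counts those of size $n$ (for $n\ge1$). *)

(* Defs.v *)
From mathcomp Require Import all_boot.
Set Implicit Arguments. Unset Strict Implicit. Unset Printing Implicit Defensive.

Definition is_partition (n : nat) (s : seq nat) : bool :=
  [&& sorted geq s, all (fun x => 0 < x) s & sumn s == n].

Fixpoint parts_le (fuel m n : nat) : seq (seq nat) :=
  match fuel with
  | 0 => if n == 0 then [:: [::]] else [::]
  | fuel'.+1 =>
      if n == 0 then [:: [::]]
      else flatten [seq [seq k :: s | s <- parts_le fuel' k (n - k)]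
                   | k <- iota 1 (minn m n)]
  end.

(* The list of all partitions of n (each exactly once), filtered by the
   defining predicate for transparency. *)
Definition partitions (n : nat) : seq (seq nat) :=
  [seq s <- parts_le n n n | is_partition n s].

(* Ground state non-unitary: no part equal to 1, and the largest part
   (the head of the nonincreasing sequence) occurs at least twice. *)
Definition gsnu (s : seq nat) : bool :=
  (1 \notin s) && (1 < count_mem (head 0 s) s).

Definition gamma (n : nat) : nat := count gsnu (partitions n).

(* Main.v *)
Require Import Defs.
From mathcomp Require Import all_boot zify.
Set Implicit Arguments. Unset Strict Implicit. Unset Printing Implicit Defensive.

Fixpoint L (fuel a m n : nat) {struct fuel} : nat :=
  match fuel with
  | 0 => (n == 0)
  | f.+1 => if n == 0 then 1 else \sum_(a <= k < (minn m n).+1) L f a k (n - k)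
  end.

Lemma L_fuel a : 0 < a -> forall f1 f2 m n, n < f1 -> n < f2 -> L f1 a m n = L f2 a m n.
Proof.
move=> a0; elim=> [|f1 IH] [|f2] m n //= h1 h2.
case: eqP => // n0; apply: eq_big_nat => k /andP[ak km]; apply: IH; lia.
Qed.

Definition Lx a m n := L n.+1 a m n.

Lemma Lx_eq a m n : 0 < a -> Lx a m n =
  if n == 0 then 1 else \sum_(a <= k < (minn m n).+1) Lx a k (n - k).
Proof.
move=> a0; rewrite {1}/Lx /=; case: eqP => // n0.
apply: eq_big_nat => k /andP[ak km]; rewrite /Lx; apply: (L_fuel a0); lia.
Qed.

Lemma parts_le_valid f m n s : s \in parts_le f m n ->
  [&& sorted geq s, all (fun x => 0 < x) s, sumn s == n & all (fun x => x <= m) s].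
Proof.
elim: f m n s => [|f IH] m n s /=.
  by case: eqP => [-> | _]; rewrite ?inE // => /eqP ->.
case: eqP => [-> | n0]; first by rewrite inE => /eqP ->.
move/flattenP => [ss /mapP [k hk ->] /mapP [s' hs' ->]].
move: hk; rewrite mem_iota => /andP [k1 km].
have /and4P [h1 h2 /eqP h3 h4] := IH _ _ _ hs'.
have gt : transitive geq by move=> y x z /= e1 e2; exact: leq_trans e2 e1.
rewrite /= (path_sortedE gt) h1 h2 h3.
have kmn : k <= minn m n by lia.
rewrite !andbT; apply/and5P; split.
- by apply/allP => x /(allP h4).
- by lia.
- by apply/eqP; lia.
- by lia.
- by apply/allP => x /(allP h4) => hx; lia.
Qed.

Lemma count_no1 f m n : count (fun s => 1 \notin s) (parts_le f m n) = L f 2 m n.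
Proof.
elim: f m n => [|f IH] m n /=; first by case: (n == 0).
case: eqP => // n0.
rewrite count_flatten -map_comp sumnE big_map.
have -> : iota 1 (minn m n) = index_iota 1 (minn m n).+1 by rewrite /index_iota subn1.
case: m => [|m]; first by rewrite min0n !big_geq.
rewrite big_ltn; last by lia.
rewrite /= count_map.
rewrite (eq_count (a2 := pred0)); last by [].
rewrite count_pred0 add0n.
apply: eq_big_nat => k hk /=; rewrite count_map -IH.
apply: eq_count => s /=; rewrite inE negb_or.
have -> : (1 == k) = false by apply/eqP; lia.
done.
Qed.

Definition P a N := \sum_(a <= m < N.+1) (if 2 * m <= N then Lx a m (N - 2 * m) else 0).

Lemma count_gs f k N : 1 < k ->
  count (fun s => (1 \notin s) && (k \in s)) (parts_le f.+1 k N) =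
  if (0 < N) && (k <= N) then L f 2 k (N - k) else 0.
Proof.
move=> k1 /=; case: eqP => [-> | N0] //=.
rewrite count_flatten -map_comp sumnE big_map.
have -> : iota 1 (minn k N) = index_iota 1 (minn k N).+1 by rewrite /index_iota subn1.
have Hz : forall j, j < k -> count (fun s => (1 \notin s) && (k \in s))
     [seq j :: s | s <- parts_le f j (N - j)] = 0.
  move=> j jk; rewrite count_map (eq_in_count (a2 := pred0)) ?count_pred0 // => s hs /=.
  rewrite [k \in _]inE; case: (k =P j) => [?|_]; first lia.
  case hk: (k \in s); first last. by rewrite andbF.
  have /and4P [_ _ _ h4] := parts_le_valid hs.
  by have := allP h4 k hk; lia.
case: (leqP k N) => kN.
  rewrite big_nat_recr /=; last by lia.
  rewrite big_nat_cond big1 => [|j /andP[/andP[_ hj] _]]; last by apply: Hz.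
  rewrite add0n count_map -count_no1.
  have -> : 0 < N by lia.
  apply: eq_count => s /=; rewrite mem_head andbT inE negb_or.
  by have -> : (1 == k) = false by apply/eqP; lia.
- rewrite andbF big_nat_cond big1 // => j /andP[/andP[_ hj] _]; apply: Hz; lia.
Qed.

Lemma gamma_P n : gamma n = P 2 n.
Proof.
rewrite /gamma /partitions count_filter.
have -> : count (predI gsnu (is_partition n)) (parts_le n n n) = count gsnu (parts_le n n n).
  apply: eq_in_count => s hs /=; have /and4P[h1 h2 h3 _] := parts_le_valid hs.
  by rewrite /is_partition h1 h2 h3 !andbT.
case: n => [|n]; first by rewrite /P big_geq.
rewrite /= count_flatten -map_comp sumnE big_map minnn.
have -> : iota 1 n.+1 = index_iota 1 n.+2 by rewrite /index_iota subn1.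
rewrite big_ltn //.
rewrite /= count_map (eq_count (a2 := pred0)) ?count_pred0; last first.
  by [].
rewrite add0n /P; apply: eq_big_nat => k /andP[k2 kn].
rewrite count_map.
rewrite (eq_count (a2 := fun s => (1 \notin s) && (k \in s))); last first.
  move=> s; rewrite /gsnu /= eqxx inE negb_or add1n ltnS -has_count has_pred1.
  by have -> : (1 == k) = false by apply/eqP; lia.
case: n kn => [|n'] kn; first lia.
rewrite count_gs //.
have -> : ((0 < n'.+2 - k) && (k <= n'.+2 - k)) = (2 * k <= n'.+2).
  by apply/andP/idP => [[? ?]|?]; [lia|split; lia].
case: ifP => // h; rewrite /Lx.
have -> : n'.+2 - k - k = n'.+2 - 2 * k by lia.
apply: L_fuel => //; lia.
Qed.

Lemma sum_widen lo n1 n2 (F : nat -> nat) : n1 <= n2 ->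
  (forall k, n1 <= k < n2 -> F k = 0) ->
  \sum_(lo <= k < n1) F k = \sum_(lo <= k < n2) F k.
Proof.
move=> h12 hF; case: (leqP lo n1) => hl.
  rewrite [RHS](@big_cat_nat _ _ _ n1) //=.
  rewrite -[LHS]addn0; congr (_ + _); symmetry.
  by rewrite big_nat_cond; apply: big1 => k /andP[/hF -> _].
rewrite big_geq; last by lia.
rewrite big_nat_cond big1 // => k /andP[/andP[h1 h2] _]; apply: hF; lia.
Qed.

Lemma sum_cut lo hi c (F : nat -> nat) :
  \sum_(lo <= k < hi) (if k < c then F k else 0) = \sum_(lo <= k < minn hi c) F k.
Proof.
elim: hi => [|hi IH]; first by rewrite min0n !big_geq.
case: (leqP lo hi) => hl.
  rewrite big_nat_recr //= IH.
  case: (ltnP hi c) => hc.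
    have -> : minn hi.+1 c = hi.+1 by lia.
    by rewrite big_nat_recr.
  have -> : minn hi.+1 c = c by lia.
  by rewrite addn0.
rewrite !big_geq //; lia.
Qed.

Lemma Lx0 a m : 0 < a -> Lx a m 0 = 1.
Proof. by move=> a0; rewrite Lx_eq. Qed.

Lemma Lx_empty a m N : 0 < a -> m < a -> 0 < N -> Lx a m N = 0.
Proof.
move=> a0 ma N0; rewrite Lx_eq //.
have -> : (N == 0) = false by apply/eqP; lia.
rewrite big_geq //; lia.
Qed.

Lemma LxC a m N : 0 < a -> Lx a m N =
  Lx a.+1 m N + (if (a <= m) && (a <= N) then Lx a m (N - a) else 0).
Proof.
move=> a0; move: m; elim/ltn_ind: N => N IH m.
have a1 : 0 < a.+1 by [].
case: (posnP N) => [->|N0].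
  rewrite !Lx0 //; have -> : (a <= 0) = false by lia.
  by rewrite andbF.
case: (leqP a (minn m N)) => h; last first.
  have -> : (a <= m) && (a <= N) = false by apply/andP; case; lia.
  rewrite addn0 Lx_eq // (Lx_eq m N a1).
  have -> : (N == 0) = false by apply/eqP; lia.
  by rewrite !big_geq //; lia.
have -> : (a <= m) && (a <= N) by apply/andP; split; lia.
rewrite Lx_eq // (Lx_eq m N a1).
have -> : (N == 0) = false by apply/eqP; lia.
rewrite big_ltn; last by lia.
rewrite (eq_big_nat _ _ (F2 := fun k => Lx a.+1 k (N - k) +
   (if k < (N - a).+1 then Lx a k (N - a - k) else 0))); last first.
  move=> k /andP [k1 k2]; rewrite IH; last by lia.
  have -> : (a <= k) by lia.
  case: ifP => hk; case: ifP => hk2 //; try lia.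
  by have -> : N - k - a = N - a - k by lia.
rewrite big_split /= sum_cut.
have -> : minn (minn m N).+1 (N - a).+1 = (minn m (N - a)).+1 by lia.
rewrite addnCA; congr (_ + _).
rewrite (Lx_eq m (N - a)) // (Lx_eq a (N - a)) //.
case: eqP => [NA|NA].
  by rewrite big_geq //; lia.
case: (leqP a (N - a)) => h2.
  rewrite (big_ltn (m := a)); last by lia.
  rewrite (big_ltn (m := a)); last by lia.
  rewrite (big_geq (m := a.+1)) ?addn0 //; lia.
rewrite !big_geq //; lia.
Qed.

Lemma Lx_mono a m N : 0 < a -> Lx a.+1 m N <= Lx a m N.
Proof. by move=> a0; rewrite (LxC m N a0) leq_addr. Qed.

Lemma Lx_small a m N : 0 < a -> Lx a m N =
  (N == 0) + \sum_(a <= x < m.+1) (if x <= N then Lx x m (N - x) else 0).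
Proof.
move=> a0; move: {2}(m.+1 - a) (erefl (m.+1 - a)) => d.
elim: d a a0 => [|d IH] a a0 hd.
  rewrite big_geq; last by lia.
  case: (posnP N) => [->|N0]; first by rewrite Lx0.
  rewrite Lx_empty //; last by lia.
rewrite LxC // IH //; last by lia.
have -> : a <= m by lia.
rewrite [in RHS]big_ltn; last by lia.
rewrite /=; case: ifP => _; lia.
Qed.

Lemma contains_next a m M : 0 < a -> a < m ->
  Lx a.+2 m M + (if a < M then Lx a m (M - a.+1) else 0) <= Lx a m M.
Proof.
move=> a0 am; elim/ltn_ind: M => M IH.
have e1 := LxC m M a0.
have a1 : 0 < a.+1 by [].
have e2 := LxC m M a1.
case: (ltnP a M) => hM; last first.
  rewrite addn0; apply: leq_trans (Lx_mono _ _ a1) _; exact: Lx_mono.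
have e3 := LxC m (M - a.+1) a0.
have := IH (M - a) ltac:(lia).
rewrite e1 e2 e3.
have -> : (a <= m) && (a <= M) by apply/andP; split; lia.
have -> : (a.+1 <= m) && (a.+1 <= M) by apply/andP; split; lia.
have -> : a <= m by lia.
case: ifP => h1; case: ifP => h2; try lia.
have -> : M - a.+1 - a = M - a - a.+1 by lia.
lia.
Qed.

Lemma shift_dec a m M : 0 < a -> 1 < M -> Lx a.+1 m M.-1 <= Lx a m (M - 2).
Proof.
move=> a0 M1.
rewrite (Lx_small _ _ (ltn0Sn a)) (Lx_small _ _ a0).
have -> : (M.-1 == 0) = false by apply/eqP; lia.
rewrite add0n; apply: leq_trans (leq_addl _ _).
case: (leqP a m) => am; last by rewrite big_geq //; lia.
rewrite big_add1 /= (big_nat_recr _ _ _ am) /=.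
apply: leq_trans (leq_addr _ _).
rewrite big_nat_cond [X in _ <= X]big_nat_cond.
apply: leq_sum => x /andP[/andP[x1 x2] _].
have -> : (x.+1 <= M.-1) = (x <= M - 2) by lia.
case: ifP => // _.
have -> : M.-1 - x.+1 = M - 2 - x by lia.
apply: Lx_mono; lia.
Qed.

Lemma key a m M : 0 < a -> a < m -> 1 < M ->
  Lx a m M.-1 + Lx a.+2 m M <= Lx a m M + Lx a m (M - 2).
Proof.
move=> a0 am M1.
have e1 := LxC m M.-1 a0.
have h2 := contains_next M a0 am.
have h3 := shift_dec m a0 M1.
rewrite e1.
have -> : (a <= m) && (a <= M.-1) = (a < M) by apply/andP/idP => [[? ?]|?]; [lia|split; lia].
move: h2; case: ifP => h; last lia.
have -> : M.-1 - a = M - a.+1 by lia.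
lia.
Qed.

Lemma Lx_aa a M : 0 < a -> Lx a a M <= 1.
Proof.
move=> a0; elim/ltn_ind: M => M IH.
rewrite Lx_small // big_nat1.
case: (posnP M) => [->|M0]; first by have -> : (a <= 0) = false by lia.
case: ifP => // h; apply: IH; lia.
Qed.

Lemma Lx_pos a m M : 0 < a -> a <= M -> M <= m -> 0 < Lx a m M.
Proof.
move=> a0 aM Mm; rewrite Lx_eq //.
have -> : (M == 0) = false by apply/eqP; lia.
have -> : minn m M = M by lia.
rewrite big_nat_recr //= subnn Lx0 //; lia.
Qed.

Lemma P_widen a N K : N < K ->
  P a N = \sum_(a <= m < K) (if 2 * m <= N then Lx a m (N - 2 * m) else 0).
Proof.
move=> NK; rewrite /P; apply: sum_widen => // k hk.
by have -> : (2 * k <= N) = false by lia.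
Qed.

Lemma Prec a N : 0 < a -> P a N = P a.+1 N + P a (N - a) + (N == 2 * a).
Proof.
move=> a0; case: (ltnP N a) => hN.
  rewrite /P !big_geq; try lia.
rewrite [P a N]/P.
rewrite (eq_big_nat _ _ (F2 := fun m => (if 2 * m <= N then Lx a.+1 m (N - 2 * m) else 0)
   + (if 2 * m + a <= N then Lx a m (N - a - 2 * m) else 0))); last first.
  move=> m /andP[m1 m2]; rewrite LxC //.
  have -> : a <= m by [].
  case: (leqP (2 * m) N) => h1.
    have -> : (a <= N - 2 * m) = (2 * m + a <= N) by lia.
    case: (leqP (2 * m + a) N) => // _.
    by have -> : N - 2 * m - a = N - a - 2 * m by lia.
  by have -> : (2 * m + a <= N) = false by lia.
rewrite big_split /= big_ltn; last by lia.
have ET : (if 2 * a <= N then Lx a.+1 a (N - 2 * a) else 0) = (N == 2 * a).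
  case: ifP => h; last by have -> : (N == 2 * a) = false by apply/eqP; lia.
  case: (eqVneq N (2 * a)) => [->|hne].
    by rewrite subnn Lx0.
  rewrite Lx_empty //; lia.
have EB : \sum_(a <= i < N.+1) (if 2 * i + a <= N then Lx a i (N - a - 2 * i) else 0)
   = P a (N - a).
  rewrite (@P_widen a (N - a) N.+1); last by lia.
  apply: eq_big_nat => m _.
  by have -> : (2 * m + a <= N) = (2 * m <= N - a) by lia.
rewrite ET EB /P; lia.
Qed.

Lemma Lx_one a m : 1 < a -> Lx a m 1 = 0.
Proof. move=> a1; rewrite Lx_eq; last lia. rewrite /= big_geq //; lia. Qed.

Lemma leq_sum_range lo hi (F1 F2 : nat -> nat) :
  (forall m, lo <= m < hi -> F1 m <= F2 m) ->
  \sum_(lo <= m < hi) F1 m <= \sum_(lo <= m < hi) F2 m.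
Proof.
move=> h; rewrite big_nat_cond [X in _ <= X]big_nat_cond.
by apply: leq_sum => m /andP[hm _]; exact: h.
Qed.

Lemma sum_ind lo hi c : \sum_(lo <= j < hi) (j == c : nat) = (lo <= c < hi).
Proof.
rewrite (eq_bigr (fun j => if j == c then 1 else 0)) => [|j _]; last by case: (j == c).
by rewrite -big_mkcond /= big_nat1_eq; case: ifP.
Qed.

Lemma Fineq N : 26 <= N -> P 4 N.-1 <= P 4 N + P 4 (N - 2).
Proof.
move=> hN.
rewrite (@P_widen 4 N.-1 N.+1); last by lia.
rewrite (@P_widen 4 (N - 2) N.+1); last by lia.
rewrite /P.
set G := fun m => if (4 < m) && (2 * m <= N) then Lx 6 m (N - 2 * m) else 0.
have hterm : forall m, 4 <= m < N.+1 ->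
   (if 2 * m <= N.-1 then Lx 4 m (N.-1 - 2 * m) else 0) + G m <=
   (if 2 * m <= N then Lx 4 m (N - 2 * m) else 0) +
   (if 2 * m <= N - 2 then Lx 4 m (N - 2 - 2 * m) else 0) +
   (m == N %/ 2) + (m == 4).
  move=> m /andP[m1 m2]; rewrite /G.
  case: (eqVneq m 4) => [->|m4].
    rewrite /=; case: ifP => _; last lia.
    have := Lx_aa (N.-1 - 2 * 4) (isT : 0 < 4); lia.
  have m5 : 4 < m by lia.
  rewrite m5 /=.
  case: (ltnP N (2 * m)) => h.
    have -> : (2 * m <= N.-1) = false by lia.
    have -> : (2 * m <= N - 2) = false by lia.
    lia.
  case: (eqVneq N (2 * m)) => [e|ne].
    have -> : (2 * m <= N.-1) = false by lia.
    have -> : (2 * m <= N - 2) = false by lia.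
    rewrite e subnn !Lx0 //; lia.
  case: (eqVneq N (2 * m).+1) => [e|ne2].
    have -> : (2 * m <= N.-1) by lia.
    have -> : (2 * m <= N - 2) = false by lia.
    have -> : N.-1 - 2 * m = 0 by lia.
    have -> : N - 2 * m = 1 by lia.
    have -> : (m == N %/ 2) by apply/eqP; lia.
    rewrite Lx0 // Lx_one //; lia.
  have hM : 1 < N - 2 * m by lia.
  have -> : (2 * m <= N.-1) by lia.
  have -> : (2 * m <= N - 2) by lia.
  have := @key 4 m (N - 2 * m) isT m5 hM.
  have -> : (N - 2 * m).-1 = N.-1 - 2 * m by lia.
  have -> : N - 2 * m - 2 = N - 2 - 2 * m by lia.
  lia.
have hsum := leq_sum_range hterm.
rewrite !big_split /= !sum_ind in hsum.
set m1 := N %/ 2 - 3.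
set m2 := N %/ 2 - 4.
have hG : \sum_(4 <= m < N.+1) ((m == m1) + (m == m2)) <= \sum_(4 <= m < N.+1) G m.
  apply: leq_sum_range => m _.
  rewrite /G; case: (eqVneq m m1) => [->|h1].
    have -> : (m1 == m2) = false by apply/eqP; lia.
    have -> : (4 < m1) && (2 * m1 <= N) by apply/andP; split; lia.
    apply: Lx_pos => //; lia.
  case: (eqVneq m m2) => [->|h2] //.
  have -> : (4 < m2) && (2 * m2 <= N) by apply/andP; split; lia.
  apply: Lx_pos => //; lia.
rewrite big_split /= !sum_ind in hG.
move: hsum hG.
have -> : (4 <= m1 < N.+1) by apply/andP; split; lia.
have -> : (4 <= m2 < N.+1) by apply/andP; split; lia.
have -> : (4 <= 4 < N.+1) by apply/andP; split; lia.
case: (4 <= N %/ 2 < N.+1); lia.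
Qed.

Lemma Prec' a N K : 0 < a -> 2 * a < N -> K = N - a -> P a N = P a.+1 N + P a K.
Proof.
move=> a0 hN ->; rewrite Prec //.
have -> : (N == 2 * a) = false by apply/eqP; lia.
by rewrite addn0.
Qed.

Lemma main_step n : 32 <= n ->
  P 2 n + P 4 n.-1 + P 2 (n - 7) = P 2 n.-1 + P 4 n + P 4 (n - 2) + P 2 (n - 6).
Proof.
move=> hn.
have e1 := @Prec' 2 n (n - 2) isT ltac:(lia) ltac:(lia).
have e2 := @Prec' 2 (n - 2) (n - 4) isT ltac:(lia) ltac:(lia).
have e3 := @Prec' 2 (n - 4) (n - 6) isT ltac:(lia) ltac:(lia).
have e4 := @Prec' 2 n.-1 (n - 3) isT ltac:(lia) ltac:(lia).
have e5 := @Prec' 2 (n - 3) (n - 5) isT ltac:(lia) ltac:(lia).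
have e6 := @Prec' 2 (n - 5) (n - 7) isT ltac:(lia) ltac:(lia).
have f1 := @Prec' 3 n (n - 3) isT ltac:(lia) ltac:(lia).
have f2 := @Prec' 3 (n - 2) (n - 5) isT ltac:(lia) ltac:(lia).
have f3 := @Prec' 3 n.-1 (n - 4) isT ltac:(lia) ltac:(lia).
lia.
Qed.

Lemma baseB : [&& gamma 25 <= gamma 26, gamma 26 <= gamma 27, gamma 27 <= gamma 28,
  gamma 28 <= gamma 29, gamma 29 <= gamma 30 & gamma 30 <= gamma 31].
Proof. by vm_compute. Qed.

Lemma mainP n : 26 <= n -> P 2 n.-1 <= P 2 n.
Proof.
elim/ltn_ind: n => n IH hn.
case: (leqP n 31) => h.
  rewrite -!gamma_P.
  have /andP [b1 /andP [b2 /andP [b3 /andP [b4 /andP [b5 b6]]]]] := baseB.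
  have : (n == 26) || (n == 27) || (n == 28) || (n == 29) || (n == 30) || (n == 31) by lia.
  by case/orP => [/orP [/orP [/orP [/orP [/eqP -> | /eqP ->] | /eqP ->] | /eqP ->] | /eqP ->] | /eqP ->].
have h1 := IH (n - 6) ltac:(lia) ltac:(lia).
have e : (n - 6).-1 = n - 7 by lia.
rewrite e in h1.
have h2 := @Fineq n ltac:(lia).
have h3 := main_step (n := n) ltac:(lia).
lia.
Qed.

Theorem proposition2 (n : nat) : 26 <= n -> gamma n.-1 <= gamma n.
Proof. by move=> hn; rewrite !gamma_P; exact: mainP. Qed.
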